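(* Let $r,s,t$ be nonzero reals and $\lambda=(\lambda_k)_{k\ge0}$ a strictly increasing sequence of positive reals with $\lambda_k\to\infty$. Let $D=(d_{nk})$ be the inverse of the lower triangular matrix $B(r,s,t)$. For $x\in\omega$ put $\widehat W_k(x)=\frac{1}{\lambda_k}\sum_{j=0}^k(\lambda_j-\lambda_{j-1})(rx_j+sx_{j-1}+tx_{j-2})$ and $\alpha_k(\lambda)=\widehat W_k(x)$. For each fixed $k\in\mathbb{N}$ define $b^{(k)}(\lambda)=(b^{(k)}_n(\lambda))_{n\in\mathbb{N}}$ by $$b_n^{(k)}(\lambda)=\begin{cases}\dfrac{d_{nk}\lambda_k}{\lambda_k-\lambda_{k-1}}-\dfrac{d_{n,k+1}\lambda_k}{\lambda_{k+1}-\lambda_k},& n>k,\\[2mm] \dfrac{1}{r}\dfrac{\lambda_k}{\lambda_k-\lambda_{k-1}},& n=k,\\[2mm] 0,& n<k.\end{cases}$$ Then: (i) $(b^{(k)}(\lambda))_{k\in\mathbb{N}}$ is a Schauder basis of $c_0^\lambda(\widehat B)$, and every $x\in c_0^\lambda(\widehat B)$ has the unique representation $x=\sum_k\alpha_k(\lambda)b^{(k)}(\lambda)$; (ii) for $1\le p<\infty$, $(b^{(k)}(\lambda))_{k\in\mathbb{N}}$ is a Schauder basis of $\ell_p^\lambda(\widehat B)$, and every $x\in\ell_p^\lambda(\widehat B)$ has the unique representation $x=\sum_k\alpha_k(\lambda)b^{(k)}(\lambda)$; (iii) with $b=(b_k)$, $b_k=\sum_{j=0}^k d_{kj}$, the sequence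 $\{b,b^{(0)}(\lambda),b^{(1)}(\lambda),\dots\}$ is a Schauder basis of $c^\lambda(\widehat B)$, and every $x\in c^\lambda(\widehat B)$ has the unique representation $x=lb+\sum_k[\alpha_k(\lambda)-l]b^{(k)}(\lambda)$, where $l=\lim_{k\to\infty}\widehat W_k(x)$.
   Context: $\omega$: all complex sequences indexed by $\mathbb{N}=\{0,1,\dots\}$. Convention: terms with negative subscript are $0$. $B(r,s,t)=(b_{nk})$ is the lower triangular matrix with $b_{nn}=r$, $b_{n,n-1}=s$, $b_{n,n-2}=t$ and all other entries $0$; its inverse $D=(d_{nk})$ is lower triangular, explicitly $d_{nk}=\frac1r\sum_{v=0}^{n-k}\rho_1^{\,n-k-v}\rho_2^{\,v}$ for $0\le k\le n$ and $d_{nk}=0$ for $k>n$, where $\rho_{1,2}=\frac{-s\pm\sqrt{s^2-4tr}}{2r}$. For $\mu\in\{c_0,c,\ell_p\}$, $\mu^\lambda(\widehat B)=\{x\in\omega:(\widehat W_n(x))_n\in\mu\}$, normed by $\|x\|=\sup_n|\widehat W_n(x)|$ for $\mu\in\{c_0,c\}$ and $\|x\|=(\sum_n|\widehat W_n(x)|^p)^{1/p}$ for $\mu=\ell_p$. A sequence $(e_k)$ in a normed space $X$ is a Schauder basis if every $x\in X$ has a unique expansion $x=\sum_k\beta_ke_k$ convergent in norm. *)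

(* Defs.v *)
From mathcomp Require Import all_boot all_order all_algebra.
From mathcomp Require Import all_classical all_reals all_analysis.
From mathcomp Require Export complex.
Import Order.TTheory GRing.Theory Num.Theory.
Import numFieldNormedType.Exports.

Set Implicit Arguments.
Unset Strict Implicit.
Unset Printing Implicit Defensive.

Local Open Scope classical_set_scope.
Local Open Scope ring_scope.
Local Open Scope complex_scope.

Section Defs.
Variable R : realType.

(* convention: terms with negative subscript are 0 *)
Definition prev {T : nmodType} (f : nat -> T) (j : nat) : T :=
  if j is j'.+1 then f j' else 0.

Definition Bmat (r s t : R) (n k : nat) : R :=
  if n == k then r else if n == k.+1 then s else if n == k.+2 then t else 0.

Definition What (r s t : R) (lam : nat -> R) (x : nat -> R[i]) (k : nat) : R[i] :=
  ((lam k)^-1)%:C * \sum_(j < k.+1)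
     ((lam j - prev lam j)%:C *
      (r%:C * x j + s%:C * prev x j + t%:C * prev (prev x) j)).

Definition bk (r : R) (d : nat -> nat -> R) (lam : nat -> R) (k : nat) (n : nat) : R[i] :=
  if (k < n)%N then
    (d n k * lam k / (lam k - prev lam k) - d n k.+1 * lam k / (lam k.+1 - lam k))%:C
  else if n == k then (r^-1 * (lam k / (lam k - prev lam k)))%:C
  else 0.

Definition bvec (d : nat -> nat -> R) (k : nat) : R[i] := (\sum_(j < k.+1) d k j)%:C.

Definition c0_lam (r s t : R) (lam : nat -> R) (x : nat -> R[i]) : Prop :=
  (fun n => Normc.normc (What r s t lam x n)) @ \oo --> (0 : R).

Definition c_lam (r s t : R) (lam : nat -> R) (x : nat -> R[i]) : Prop :=
  exists l : R[i], (fun n => Normc.normc (What r s t lam x n - l)) @ \oo --> (0 : R).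

Definition lp_lam (p : R) (r s t : R) (lam : nat -> R) (x : nat -> R[i]) : Prop :=
  cvgn (series (fun n => Normc.normc (What r s t lam x n) `^ p)).

Definition sup_norm (r s t : R) (lam : nat -> R) (x : nat -> R[i]) : R :=
  sup (range (fun n => Normc.normc (What r s t lam x n))).

Definition lp_norm (p : R) (r s t : R) (lam : nat -> R) (x : nat -> R[i]) : R :=
  (limn (series (fun n => Normc.normc (What r s t lam x n) `^ p))) `^ (p^-1).

Definition expands (N : (nat -> R[i]) -> R) (e : nat -> nat -> R[i])
    (beta : nat -> R[i]) (x : nat -> R[i]) : Prop :=
  (fun m => N (fun n => x n - \sum_(k < m) beta k * e k n)) @ \oo --> (0 : R).

Definition schauder_basis (X : (nat -> R[i]) -> Prop) (N : (nat -> R[i]) -> R)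
    (e : nat -> nat -> R[i]) : Prop :=
  (forall k, X (e k)) /\
  (forall x, X x -> exists! beta : nat -> R[i], expands N e beta x).

End Defs.

(* Main.v *)
Require Import Defs.
From mathcomp Require Import all_boot all_order all_algebra.
From mathcomp Require Import all_classical all_reals all_analysis.
From mathcomp Require Import complex.
From mathcomp Require Import ring lra zify.
Import Order.TTheory GRing.Theory Num.Theory.
Import numFieldNormedType.Exports.
Import Defs.
Local Open Scope classical_set_scope.
Local Open Scope ring_scope.
Local Open Scope complex_scope.


Section Alg.
Variables (R : realType) (r s t : R) (lam : nat -> R).
Local Notation W := (What r s t lam).

Lemma What_add (x y : nat -> R[i]) n : W (fun i => x i + y i) n = W x n + W y n.
Proof.
rewrite /What -mulrDr -big_split; congr (_ * _); apply: eq_bigr => j _.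
by case: (nat_of_ord j) => [|[|j']] /=; ring.
Qed.

Lemma What_scale c (x : nat -> R[i]) n : W (fun i => c * x i) n = c * W x n.
Proof.
rewrite /What [RHS]mulrCA; congr (_ * _); rewrite mulr_sumr; apply: eq_bigr => j _.
by case: (nat_of_ord j) => [|[|j']] /=; ring.
Qed.

Lemma What0 n : W (fun _ => 0) n = 0.
Proof.
transitivity (W (fun i => 0 * (fun _ => (0 : R[i])) i) n).
  by congr W; apply/funext=> i; rewrite mul0r.
by rewrite What_scale mul0r.
Qed.

Lemma What_sum m (f : nat -> nat -> R[i]) n :
  W (fun i => \sum_(k < m) f k i) n = \sum_(k < m) W (f k) n.
Proof.
elim: m => [|m IH].
  rewrite big_ord0; transitivity (W (fun _ => 0) n); last exact: What0.
  by congr W; apply/funext=> i; rewrite big_ord0.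
rewrite big_ord_recr /= -IH -What_add; congr W; apply/funext=> i.
by rewrite big_ord_recr.
Qed.

Lemma What_lin (x : nat -> R[i]) (b : nat -> R[i]) (e : nat -> nat -> R[i]) m n :
  W (fun i => x i - \sum_(k < m) b k * e k i) n =
  W x n - \sum_(k < m) b k * W (e k) n.
Proof.
have -> : (fun i => x i - \sum_(k < m) b k * e k i) =
  (fun i => x i + (-1) * \sum_(k < m) (fun k i => b k * e k i) k i).
  by apply/funext=> i; rewrite mulN1r.
rewrite What_add What_scale (What_sum _ (fun k i => b k * e k i)) mulN1r; congr (_ - _).
by apply: eq_bigr => k _; rewrite What_scale.
Qed.
End Alg.


Lemma sum_delta (V : pzRingType) (a : nat -> V) (m k : nat) :
  \sum_(j < m) a j * (((j : nat) == k)%:R) = if (k < m)%N then a k else 0.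
Proof.
elim: m => [|m IH]; first by rewrite big_ord0.
rewrite big_ord_recr /= IH.
case: (ltngtP k m) => hk.
  by rewrite (ltn_trans hk (ltnSn _)) mulr0 addr0.
- have -> : (k < m.+1)%N = false by apply/negbTE; lia.
  by rewrite mulr0 addr0.
- by rewrite hk ltnSn mulr1 add0r.
Qed.

Section Alg2.
Variables (R : realType) (r s t : R) (lam : nat -> R).
Local Notation W := (What r s t lam).

Lemma Bsum (x : nat -> R) j :
  r * x j + s * prev x j + t * prev (prev x) j = \sum_(i < j.+1) Bmat r s t j i * x i.
Proof.
case: j => [|[|j]].
- by rewrite big_ord_recr big_ord0 /= /Bmat eqxx; ring.
- by rewrite !big_ord_recr big_ord0 /= /Bmat /=; ring.
rewrite !big_ord_recr /= big1 /=.
  have e1 : (j.+2 == j) = false by apply/negbTE; lia.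
  have e2 : (j.+2 == j.+1) = false by apply/negbTE; lia.
  by rewrite /Bmat e1 e2 !eqxx; ring.
move=> i _; rewrite /Bmat; have := ltn_ord i => hi.
have h1 : (j.+2 == i) = false by apply/negbTE; lia.
have h2 : (j.+2 == i.+1) = false by apply/negbTE; lia.
have h3 : (j.+2 == i.+2) = false by apply/negbTE; lia.
by rewrite h1 h2 h3 mul0r.
Qed.

Lemma What_real (u : nat -> R) n :
  W (fun i => (u i)%:C) n =
  ((lam n)^-1 * \sum_(j < n.+1) (lam j - prev lam j) * \sum_(i < j.+1) Bmat r s t j i * u i)%:C.
Proof.
rewrite /What rmorphM rmorph_sum; congr (_ * _); apply: eq_bigr => j _.
rewrite -Bsum.
case: (nat_of_ord j) => [|[|j']] /=; rewrite !rmorphM !rmorphD ?rmorphB ?rmorph0 /=; ring.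
Qed.
End Alg2.

Section Basis.
Variables (R : realType) (r s t : R) (lam : nat -> R) (d : nat -> nat -> R).
Hypothesis hr : r != 0.
Hypothesis lam_pos : forall k, 0 < lam k.
Hypothesis lam_incr : forall k, lam k < lam k.+1.
Hypothesis d_lower : forall n k, (n < k)%N -> d n k = 0.
Hypothesis d_inv_r : forall n k, \sum_(j < n.+1) Bmat r s t n j * d j k = (n == k)%:R.
Hypothesis d_inv_l : forall n k, \sum_(j < n.+1) d n j * Bmat r s t j k = (n == k)%:R.
Local Notation W := (What r s t lam).

Lemma dkk k : d k k = r^-1.
Proof.
have := d_inv_l k k; rewrite big_ord_recr /= big1 ?add0r.
  by rewrite /Bmat !eqxx => h; apply: (mulIf hr); rewrite h mulVf.
move=> j _; rewrite /Bmat; have := ltn_ord j => hj.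
have h1 : (j == k :> nat) = false by apply/negbTE; lia.
have h2 : (j == k.+1 :> nat) = false by apply/negbTE; lia.
have h3 : (j == k.+2 :> nat) = false by apply/negbTE; lia.
by rewrite h1 h2 h3 mulr0.
Qed.

Lemma dpos k : lam k - prev lam k != 0.
Proof.
case: k => [|k] /=; first by rewrite subr0 gt_eqF.
by rewrite subr_eq0 gt_eqF.
Qed.

Lemma bk_eq k i : bk r d lam k i =
  (d i k * (lam k / (lam k - prev lam k)) - d i k.+1 * (lam k / (lam k.+1 - lam k)))%:C.
Proof.
rewrite /bk; case: (ltngtP k i) => hk.
- by rewrite !mulrA.
  by rewrite !d_lower ?mul0r ?subr0 ?rmorph0 //; lia.
- by rewrite hk dkk d_lower // mul0r subr0.
Qed.

Lemma What_bk k n : W (bk r d lam k) n = ((n == k)%:R).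
Proof.
set c1 := lam k / (lam k - prev lam k).
set c2 := lam k / (lam k.+1 - lam k).
have -> : bk r d lam k = fun i => (d i k * c1 - d i k.+1 * c2)%:C.
  by apply/funext => i; rewrite bk_eq.
rewrite What_real -(rmorph_nat (real_complex R)); apply: congr1.
have inner : forall j, \sum_(i < j.+1) Bmat r s t j i * (d i k * c1 - d i k.+1 * c2)
   = (j == k)%:R * c1 - (j == k.+1)%:R * c2.
  move=> j; under eq_bigr do rewrite mulrBr !(mulrA (Bmat _ _ _ _ _)).
  by rewrite sumrB -!mulr_suml !d_inv_r.
under eq_bigr do rewrite inner.
have e : forall j : 'I_n.+1, (lam j - prev lam j) * (((j:nat) == k)%:R * c1 - ((j:nat) == k.+1)%:R * c2)
  = ((lam j - prev lam j) * c1) * ((j:nat) == k)%:R - ((lam j - prev lam j) * c2) * ((j:nat) == k.+1)%:R.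
  by move=> j; ring.
rewrite (eq_bigr _ (fun j _ => e j)) sumrB.
rewrite (sum_delta _ (fun j => (lam j - prev lam j) * c1)).
rewrite (sum_delta _ (fun j => (lam j - prev lam j) * c2)).
have hk := dpos k; have hk1 : lam k.+1 - lam k != 0 by have := dpos k.+1.
have lk : lam k != 0 by rewrite gt_eqF.
have ln : lam n != 0 by rewrite gt_eqF.
case: (ltngtP n k) => hn.
- have -> : (k < n.+1)%N = false by apply/negbTE; lia.
  have -> : (k.+1 < n.+1)%N = false by apply/negbTE; lia.
  by rewrite subrr mulr0.
- have -> : (k < n.+1)%N = true by lia.
  have -> : (k.+1 < n.+1)%N = true by lia.
  rewrite /c1 /c2 /=.
  by rewrite (mulrC (lam k - _)) (mulrC (lam k.+1 - _)) !divfK // subrr mulr0.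
- subst n; rewrite ltnSn ltnn subr0 /c1.  
  by rewrite (mulrC (lam k - _)) divfK // mulVf.
Qed.

Lemma tele n : \sum_(j < n.+1) (lam j - prev lam j) = lam n.
Proof.
elim: n => [|n IH]; first by rewrite big_ord_recr big_ord0 /= subr0 add0r.
by rewrite big_ord_recr IH /=; ring.
Qed.

Lemma What_bvec n : W (bvec d) n = 1.
Proof.
rewrite /bvec What_real -(rmorph1 (real_complex R)); apply: congr1.
have inner : forall j, \sum_(i < j.+1) Bmat r s t j i * (\sum_(l < i.+1) d i l) = 1.
  move=> j.
  have wid : forall i : 'I_j.+1, \sum_(l < i.+1) d i l = \sum_(l < j.+1) d i l.
    move=> i; rewrite -!(big_mkord xpredT (fun l => d i l)).
    have hi := ltn_ord i.
    rewrite [RHS](big_cat_nat _ (n := i.+1)) //= [X in _ + X]big1_seq ?addr0 //.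
    move=> l /andP[_]; rewrite mem_index_iota => /andP[hl _].
    by apply: d_lower.
  under eq_bigr do rewrite wid mulr_sumr.
  rewrite exchange_big /=.
  under eq_bigr do rewrite d_inv_r.
  rewrite (eq_bigr (fun l : 'I_j.+1 => (fun _ : nat => (1:R)) l * ((l:nat) == j)%:R)).
    by rewrite (sum_delta _ (fun _ : nat => (1:R))) ltnSn.
  by move=> l _; rewrite mul1r eq_sym.
under eq_bigr do rewrite inner mulr1.
by rewrite tele mulVf // gt_eqF.
Qed.
End Basis.

Set Implicit Arguments.
Unset Strict Implicit.


Section Anal.
Variable R : realType.
Local Notation nc := (@Normc.normc R).

Lemma nc_ge0 (z : R[i]) : 0 <= nc z.
Proof. by case: z => a b; exact: sqrtr_ge0. Qed.

Lemma nc0 : nc 0 = 0.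
Proof. exact: Normc.normc0. Qed.

Lemma ev_nat (P : nat -> Prop) : (\forall n \near \oo, P n) -> exists N, forall n, (N <= n)%N -> P n.
Proof. by move=> [N _ hN]; exists N => n hn; apply: hN. Qed.

Lemma nat_ev (P : nat -> Prop) N : (forall n, (N <= n)%N -> P n) -> \forall n \near \oo, P n.
Proof. by move=> h; exists N. Qed.

Lemma cvg0_ev (u : nat -> R) : u @ \oo --> 0 -> forall e, 0 < e -> exists N, forall n, (N <= n)%N -> `|u n| <= e.
Proof. move=> hu e e0; apply: ev_nat; exact: cvgr0_norm_le. Qed.

Lemma ev_cvg0 (u : nat -> R) : (forall e, 0 < e -> exists N, forall n, (N <= n)%N -> `|u n| <= e) -> u @ \oo --> 0.
Proof.
move=> h; apply/cvgrPdist_le => e e0; have [N hN] := h e e0.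
by apply: (@nat_ev _ N) => n hn; rewrite sub0r normrN; apply: hN.
Qed.

Lemma cvgn_lim (u : nat -> R) : cvgn u -> u @ \oo --> limn u.
Proof. by move=> /cvg_ex [l hl]; rewrite (cvg_lim _ hl). Qed.

Lemma le_cvg0 (u : nat -> R) (c : R) N : u @ \oo --> 0 -> (forall n, (N <= n)%N -> c <= u n) -> c <= 0.
Proof.
move=> hu hc; have := limr_ge (cvgP _ hu) (nat_ev hc).
move=> H; have {}H := H ltac:(apply: eventually_filter). by move: H; rewrite (cvg_lim _ hu).
Qed.

Lemma bnd_ev (f : nat -> R) N C : (forall n, 0 <= f n) -> (forall n, (N <= n)%N -> f n <= C) ->
  forall n, f n <= C + \sum_(j < N) f j.
Proof.
move=> f0 hC n; have C0 : 0 <= C by apply: le_trans (f0 N) (hC N (leqnn N)).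
case: (leqP N n) => hn.
  by rewrite ler_wpDr ?sumr_ge0 // ?hC // => i _; exact: f0.
rewrite ler_wpDl // (bigD1 (Ordinal hn)) //= ler_wpDr // sumr_ge0 // => i _; exact: f0.
Qed.

Definition supN (w : nat -> R[i]) := sup (range (fun n => nc (w n))).

Lemma supN_ub w M k : (forall n, nc (w n) <= M) -> nc (w k) <= supN w.
Proof.
move=> hM; apply: ub_le_sup; last by exists k.
by exists M => _ [n _ <-]; exact: hM.
Qed.

Lemma supN_le w e : (forall n, nc (w n) <= e) -> supN w <= e.
Proof.
move=> h; apply: ge_sup; first by exists (nc (w 0%N)), 0%N.
by move=> _ [n _ <-]; exact: h.
Qed.

Lemma supN_ge0 w M : (forall n, nc (w n) <= M) -> 0 <= supN w.
Proof. by move=> h; exact: le_trans (nc_ge0 (w 0%N)) (supN_ub 0 h). Qed.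

Lemma A1 (w : nat -> R[i]) : (fun n => nc (w n)) @ \oo --> 0 ->
  (fun m => supN (fun n => w n - (if (n < m)%N then w n else 0))) @ \oo --> 0.
Proof.
move=> hw; apply: ev_cvg0 => e e0.
have [N hN] := cvg0_ev hw e0.
have hb : forall m, (N <= m)%N -> forall n, nc (w n - (if (n < m)%N then w n else 0)) <= e.
  move=> m hm n; case: ifP => hn; first by rewrite subrr nc0 ltW.
  rewrite subr0; have := hN n; rewrite ger0_norm ?nc_ge0 //; apply.
  by move/negbT: hn; rewrite -leqNgt => hn; exact: leq_trans hm hn.
exists N => m hm; rewrite ger0_norm; first exact: supN_le (hb m hm).
exact: supN_ge0 (hb m hm).
Qed.

Lemma A2 (w b : nat -> R[i]) : (fun n => nc (w n)) @ \oo --> 0 ->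
  (fun m => supN (fun n => w n - (if (n < m)%N then b n else 0))) @ \oo --> 0 -> b = w.
Proof.
move=> hw hb; apply/funext => k.
have [N hN] := cvg0_ev hw ltr01.
have key : forall m, (k.+1 <= m)%N ->
    nc (w k - b k) <= supN (fun n => w n - (if (n < m)%N then b n else 0)).
  move=> m hm.
  have hbd := @bnd_ev (fun n => nc (w n - (if (n < m)%N then b n else 0))) (maxn N m) 1
    (fun n => nc_ge0 _) _.
  have := supN_ub k (hbd _); rewrite hm; apply.
  move=> n hn; have -> : (n < m)%N = false by apply/negbTE; lia.
  rewrite subr0; have := hN n; rewrite ger0_norm ?nc_ge0 //; apply; lia.
have h := le_cvg0 hb key.
have : nc (w k - b k) = 0 by apply/eqP; rewrite eq_le h nc_ge0.
by move/Normc.eq0_normc/eqP; rewrite subr_eq0 => /eqP.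
Qed.

Lemma ser_shift (f g : nat -> R) m : (forall n, (m <= n)%N -> f n = g n) -> cvgn (series g) ->
  series f @ \oo --> limn (series g) + \sum_(j < m) (f j - g j).
Proof.
move=> hfg hg.
have E : {near \oo, (fun N => series g N + \sum_(j < m) (f j - g j)) =1 series f}.
  apply: (@nat_ev _ m) => N hN /=.
  rewrite /series /= (big_cat_nat _ (n := m)) //= [in RHS](big_cat_nat _ (n := m)) //=.
  rewrite (@eq_big_nat _ _ _ m N f g); last by move=> i /andP[hi _]; rewrite hfg.
  by rewrite sumrB -!(big_mkord xpredT); ring.
apply: cvg_trans (near_eq_cvg E) _.
by apply: cvgD; [exact: cvgn_lim | exact: cvg_cst].
Qed.

Lemma ser_le (f : nat -> R) : (forall n, 0 <= f n) -> cvgn (series f) -> forall k, f k <= limn (series f).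
Proof.
move=> f0 hc k.
have nd : {homo series f : n m / (n <= m)%N >-> n <= m}.
  by move=> a b hab; rewrite /series /=; apply: nondecreasing_series => // n _ _; exact: f0.
apply: le_trans (nondecreasing_cvgn_le nd hc k.+1).
rewrite /series /= big_nat_recr //= ler_wpDl // sumr_ge0 // => i _; exact: f0.
Qed.

Lemma ser_lim_ge0 (f : nat -> R) : (forall n, 0 <= f n) -> cvgn (series f) -> forall k, series f k <= limn (series f).
Proof.
move=> f0 hc k.
have nd : {homo series f : n m / (n <= m)%N >-> n <= m}.
  by move=> a b hab; rewrite /series /=; apply: nondecreasing_series => // n _ _; exact: f0.
exact: (nondecreasing_cvgn_le nd hc k).
Qed.

Lemma pow_cvg0 (u : nat -> R) (q : R) : 0 < q -> (forall n, 0 <= u n) -> u @ \oo --> 0 ->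
  (fun n => u n `^ q) @ \oo --> 0.
Proof.
move=> q0 u0 hu; apply: ev_cvg0 => e e0.
have [N hN] := cvg0_ev hu (powR_gt0 q^-1 e0).
exists N => n hn; rewrite ger0_norm ?powR_ge0 //.
have := hN n hn; rewrite ger0_norm // => h.
have := ge0_ler_powR (ltW q0) (x := u n) (y := e `^ q^-1).
move=> H; rewrite -[X in _ <= X](powRr1 (ltW e0)) -(mulVf (lt0r_neq0 q0)) powRrM.
by apply: H => //; rewrite nnegrE ?powR_ge0.
Qed.

Definition lpN (p : R) (w : nat -> R[i]) := (limn (series (fun n => nc (w n) `^ p))) `^ p^-1.

Lemma B1 p (w : nat -> R[i]) : 1 <= p -> cvgn (series (fun n => nc (w n) `^ p)) ->
  (fun m => lpN p (fun n => w n - (if (n < m)%N then w n else 0))) @ \oo --> 0.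
Proof.
move=> p1 hw.
set g := fun n => nc (w n) `^ p.
have p0 : 0 < p by apply: lt_le_trans ltr01 p1.
have g0 : forall n, 0 <= g n by move=> n; exact: powR_ge0.
have E : forall m, lpN p (fun n => w n - (if (n < m)%N then w n else 0)) =
    (limn (series g) - series g m) `^ p^-1.
  move=> m; rewrite /lpN; congr (_ `^ _); apply: cvg_lim => //.
  have := @ser_shift (fun n => nc (w n - (if (n < m)%N then w n else 0)) `^ p) g m _ hw.
  have -> : \sum_(j < m) (nc (w j - (if (j < m)%N then w j else 0)) `^ p - g j) = - series g m.
    rewrite /series /= big_mkord -sumrN; apply: eq_bigr => j _.
    by rewrite ltn_ord subrr nc0 powR0 ?gt_eqF // sub0r.
  apply=> n hn; have -> : (n < m)%N = false by apply/negbTE; lia.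
  by rewrite subr0.
rewrite (funext E); apply: pow_cvg0.
- by rewrite invr_gt0.
- by move=> m; rewrite subr_ge0; exact: ser_lim_ge0.
- rewrite -(subrr (limn (series g))).
  by apply: cvgB; [exact: cvg_cst | exact: cvgn_lim].
Qed.

Lemma B2 p (w b : nat -> R[i]) : 1 <= p -> cvgn (series (fun n => nc (w n) `^ p)) ->
  (fun m => lpN p (fun n => w n - (if (n < m)%N then b n else 0))) @ \oo --> 0 -> b = w.
Proof.
move=> p1 hw hb; apply/funext => k.
set g := fun n => nc (w n) `^ p.
have p0 : 0 < p by apply: lt_le_trans ltr01 p1.
have key : forall m, (k.+1 <= m)%N ->
    nc (w k - b k) <= lpN p (fun n => w n - (if (n < m)%N then b n else 0)).
  move=> m hm.
  set f := fun n => nc (w n - (if (n < m)%N then b n else 0)) `^ p.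
  have hf : series f @ \oo --> limn (series g) + \sum_(j < m) (f j - g j).
    apply: ser_shift hw => n hn; rewrite /f.
    by rewrite ltnNge hn subr0.
  have cf : cvgn (series f) := cvgP _ hf.
  have h := @ser_le f (fun n => powR_ge0 _ _) cf k.
  have fk : f k = nc (w k - b k) `^ p by rewrite /f hm.
  rewrite fk in h.
  have pi0 : 0 <= p^-1 by rewrite invr_ge0 ltW.
  have := ge0_ler_powR pi0 (x := nc (w k - b k) `^ p) (y := limn (series f)).
  rewrite -powRrM mulfV ?gt_eqF // powRr1 ?nc_ge0 //; apply => //.
    by rewrite nnegrE powR_ge0.
  by rewrite nnegrE (le_trans (powR_ge0 _ _) h).
have h := le_cvg0 hb key.
have : nc (w k - b k) = 0 by apply/eqP; rewrite eq_le h nc_ge0.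
by move/Normc.eq0_normc/eqP; rewrite subr_eq0 => /eqP.
Qed.

Definition ew (k n : nat) : R[i] := if k is k'.+1 then ((n == k')%:R) else 1.

Lemma sum_ew (b : nat -> R[i]) m n :
  \sum_(k < m.+1) b k * ew k n = b 0%N + (if (n < m)%N then b n.+1 else 0).
Proof.
rewrite big_ord_recl /= mulr1; congr (_ + _).
elim: m => [|m IH]; first by rewrite big_ord0.
rewrite big_ord_recr /= IH /ew /=.
case: (ltngtP n m) => hn.
- have -> : (n < m.+1)%N by lia.
  by rewrite mulr0 addr0.
- have -> : (n < m.+1)%N = false by apply/negbTE; lia.
  by rewrite mulr0 addr0.
- by subst n; rewrite ltnSn mulr1 add0r.
Qed.

Lemma C1 (w : nat -> R[i]) (l : R[i]) : (fun n => nc (w n - l)) @ \oo --> 0 ->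
  (fun m => supN (fun n => w n - \sum_(k < m) (fun k => if k is k'.+1 then w k' - l else l) k * ew k n))
    @ \oo --> 0.
Proof.
move=> hl; rewrite -cvg_shiftS /=.
have := A1 hl; apply: cvg_trans; apply: near_eq_cvg; apply: (@nat_ev _ 0) => m _ /=.
congr supN; apply/funext => n; rewrite (sum_ew (fun k => if k is k'.+1 then w k' - l else l)) /=.
by case: ifP => _; ring.
Qed.

Lemma C2 (w : nat -> R[i]) (l : R[i]) (b : nat -> R[i]) : (fun n => nc (w n - l)) @ \oo --> 0 ->
  (fun m => supN (fun n => w n - \sum_(k < m) b k * ew k n)) @ \oo --> 0 ->
  b = (fun k => if k is k'.+1 then w k' - l else l).
Proof.
move=> hl; rewrite -cvg_shiftS /=.
have E : (fun m => supN (fun n => w n - \sum_(k < m.+1) b k * ew k n)) =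
    (fun m => supN (fun n => w n - (b 0%N + (if (n < m)%N then b n.+1 else 0)))).
  by apply/funext => m; congr supN; apply/funext => n; rewrite sum_ew.
rewrite E => hb.
have [N hN] := cvg0_ev hl ltr01.
have bnd : forall m n, nc (w n - (b 0%N + (if (n < m)%N then b n.+1 else 0)))
    <= (1 + nc (l - b 0%N)) + \sum_(j < maxn N m) nc (w j - (b 0%N + (if (j < m)%N then b j.+1 else 0))).
  move=> m; apply: bnd_ev => [n|n hn]; first exact: nc_ge0.
  have -> : (n < m)%N = false by apply/negbTE; lia.
  rewrite addr0 (_ : w n - b 0%N = (w n - l) + (l - b 0%N)); last by ring.
  apply: le_trans (le_normcD _ _) _; apply: lerD => //.
  by have := hN n; rewrite ger0_norm ?nc_ge0 //; apply; lia.
have h0 : b 0%N = l.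
  have key : forall m, (0 <= m)%N -> nc (l - b 0%N) <= supN (fun n => w n - (b 0%N + (if (n < m)%N then b n.+1 else 0))).
    move=> m _.
    rewrite -subr_le0; apply: (@le_cvg0 (fun n => nc (w n - l)) _ m hl) => n hn.
    rewrite lerBlDl.
    have e : l - b 0%N = - (w n - l) + (w n - (b 0%N + (if (n < m)%N then b n.+1 else 0))).
      have -> : (n < m)%N = false by apply/negbTE; lia.
      by ring.
    rewrite e; apply: le_trans (le_normcD _ _) _; rewrite normcN addrC lerD2r.
    exact: supN_ub (bnd m).
  have h := le_cvg0 hb key.
  have : nc (l - b 0%N) = 0 by apply/eqP; rewrite eq_le h nc_ge0.
  by move/Normc.eq0_normc/eqP; rewrite subr_eq0 => /eqP.
have h1 := @A2 (fun n => w n - l) (fun n => b n.+1) hl.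
have h2 : (fun n => b n.+1) = (fun n => w n - l).
  apply: h1; move: hb; apply: cvg_trans; apply: near_eq_cvg; apply: (@nat_ev _ 0) => m _ /=.
  by congr supN; apply/funext => n; rewrite h0; ring.
apply/funext => -[|k] //=.
by have := congr1 (fun f => f k) h2.
Qed.
End Anal.

Section Main.
Variable R : realType.
Local Notation nc := (@Normc.normc R).

Lemma supN_eq (w1 w2 : nat -> R[i]) : (forall n, w1 n = w2 n) -> supN w1 = supN w2.
Proof. by move=> h; rewrite (funext h). Qed.

Lemma lpN_eq p (w1 w2 : nat -> R[i]) : (forall n, w1 n = w2 n) -> lpN p w1 = lpN p w2.
Proof. by move=> h; rewrite (funext h). Qed.

Lemma cvg_eq_iff (f g : nat -> R) : f = g -> (f @ \oo --> 0 <-> g @ \oo --> 0).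
Proof. by move=> ->. Qed.

Lemma lp_normE p (r s t : R) lam (y : nat -> R[i]) :
  lp_norm p r s t lam y = lpN p (What r s t lam y).
Proof. by []. Qed.

Lemma sup_normE (r s t : R) lam (y : nat -> R[i]) :
  sup_norm r s t lam y = supN (What r s t lam y).
Proof. by []. Qed.

Lemma delta_c0 k : (fun n => nc ((n == k)%:R : R[i])) @ \oo --> 0.
Proof.
apply: ev_cvg0 => e e0; exists k.+1 => n hn.
have -> : (n == k) = false by apply/negbTE; lia.
by rewrite nc0 normr0 ltW.
Qed.

Lemma delta_lp (p : R) k : 1 <= p -> cvgn (series (fun n => nc ((n == k)%:R : R[i]) `^ p)).
Proof.
move=> p1; have p0 : p != 0 by rewrite gt_eqF // (lt_le_trans ltr01 p1).
have hz : cvgn (series (fun _ : nat => (0 : R))).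
  have -> : series (fun _ : nat => (0 : R)) = (fun _ => 0).
    by apply/funext => m; rewrite /series /= big1.
  exact: (cvgP 0 (cvg_cst (0 : R))).
set f := fun n => nc ((n == k)%:R : R[i]) `^ p.
have h : series f @ \oo --> limn (series (fun _ : nat => (0 : R))) + \sum_(j < k.+1) (f j - 0).
  apply: ser_shift hz => n hn; rewrite /f.
  have -> : (n == k) = false by apply/negbTE; lia.
  by rewrite nc0 powR0.
exact: cvgP _ h.
Qed.
End Main.

Theorem theorem3 (R : realType) (r s t : R) (lam : nat -> R) (d : nat -> nat -> R)
  (hr : r != 0) (hs : s != 0) (ht : t != 0)
  (lam_pos : forall k, 0 < lam k)
  (lam_incr : forall k, lam k < lam k.+1)
  (lam_infty : lam @ \oo --> +oo)
  (d_lower : forall n k, (n < k)%N -> d n k = 0)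
  (d_inv_r : forall n k, \sum_(j < n.+1) Bmat r s t n j * d j k = (n == k)%:R)
  (d_inv_l : forall n k, \sum_(j < n.+1) d n j * Bmat r s t j k = (n == k)%:R) :
  (* (i) *)
  (schauder_basis (c0_lam r s t lam) (sup_norm r s t lam) (bk r d lam) /\
   forall x, c0_lam r s t lam x ->
     expands (sup_norm r s t lam) (bk r d lam) (What r s t lam x) x) /\
  (* (ii) *)
  (forall p : R, 1 <= p ->
   schauder_basis (lp_lam p r s t lam) (lp_norm p r s t lam) (bk r d lam) /\
   forall x, lp_lam p r s t lam x ->
     expands (lp_norm p r s t lam) (bk r d lam) (What r s t lam x) x) /\
  (* (iii) *)
  (let e := fun k => if k is k'.+1 then bk r d lam k' else bvec d in
   schauder_basis (c_lam r s t lam) (sup_norm r s t lam) e /\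
   forall x (l : R[i]), c_lam r s t lam x ->
     (fun n => Normc.normc (What r s t lam x n - l)) @ \oo --> (0 : R) ->
     expands (sup_norm r s t lam) e
       (fun k => if k is k'.+1 then What r s t lam x k' - l else l) x).
Proof.
have WB : forall k n, What r s t lam (bk r d lam k) n = ((n == k)%:R).
  by move=> k n; apply: What_bk.
have WV : forall n, What r s t lam (bvec d) n = 1.
  by move=> n; apply: What_bvec.
have Wlin1 : forall (x b : nat -> R[i]) (m n : nat),
    What r s t lam (fun n => x n - \sum_(k < m) b k * bk r d lam k n) n =
    What r s t lam x n - (if (n < m)%N then b n else 0).
  move=> x b m n; rewrite What_lin; congr (_ - _).
  rewrite -(sum_delta _ b); apply: eq_bigr => k _; by rewrite WB eq_sym.
have E1 : forall (x b : nat -> R[i]), expands (sup_norm r s t lam) (bk r d lam) b x <->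
    (fun m => supN (fun n => What r s t lam x n - (if (n < m)%N then b n else 0))) @ \oo --> 0.
  move=> x b; apply: cvg_eq_iff; apply/funext => m.
  by rewrite sup_normE; apply: supN_eq => n; exact: Wlin1.
have E2 : forall (p : R) (x b : nat -> R[i]), expands (lp_norm p r s t lam) (bk r d lam) b x <->
    (fun m => lpN p (fun n => What r s t lam x n - (if (n < m)%N then b n else 0))) @ \oo --> 0.
  move=> p x b; apply: cvg_eq_iff; apply/funext => m.
  by rewrite lp_normE; apply: lpN_eq => n; exact: Wlin1.
split.
  split; last by move=> x hx; apply/E1; exact: A1.
  split.
    move=> k; rewrite /c0_lam.
    by rewrite (_ : (fun n => Normc.normc (What r s t lam (bk r d lam k) n)) = (fun n => Normc.normc ((n == k)%:R : R[i])));
      [exact: delta_c0 | apply/funext => n; rewrite WB].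
  move=> x hx; exists (What r s t lam x); split; first by apply/E1; exact: A1.
  by move=> b /E1 hb; rewrite (A2 hx hb).
split.
  move=> p p1; split; last by move=> x hx; apply/E2; exact: B1.
  split.
    move=> k; rewrite /lp_lam.
    by rewrite (_ : (fun n => Normc.normc (What r s t lam (bk r d lam k) n) `^ p) = (fun n => Normc.normc ((n == k)%:R : R[i]) `^ p));
      [exact: delta_lp | apply/funext => n; rewrite WB].
  move=> x hx; exists (What r s t lam x); split; first by apply/E2; exact: B1.
  by move=> b /E2 hb; rewrite (B2 p1 hx hb).
move=> e.
have E3 : forall (x b : nat -> R[i]), expands (sup_norm r s t lam) e b x <->
    (fun m => supN (fun n => What r s t lam x n - \sum_(k < m) b k * ew R k n)) @ \oo --> 0.
  move=> x b; apply: cvg_eq_iff; apply/funext => m.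
  rewrite sup_normE; apply: supN_eq => n; rewrite What_lin; congr (_ - _).
  by apply: eq_bigr => -[[|k] hk] _; rewrite /e /ew /= ?WV ?WB.
split; last by move=> x l _ hl; apply/E3; exact: C1.
split.
  move=> [|k]; rewrite /c_lam /e.
    exists 1; rewrite (_ : (fun n => Normc.normc (What r s t lam (bvec d) n - 1)) = (fun _ => 0)).
      exact: cvg_cst.
    by apply/funext => n; rewrite WV subrr Normc.normc0.
  exists 0; rewrite (_ : (fun n => Normc.normc (What r s t lam (bk r d lam k) n - 0)) = (fun n => Normc.normc ((n == k)%:R : R[i]))).
    exact: delta_c0.
  by apply/funext => n; rewrite WB subr0.
move=> x [l hl]; exists (fun k => if k is k'.+1 then What r s t lam x k' - l else l).
split; first by apply/E3; exact: C1.
by move=> b /E3 hb; rewrite (C2 hl hb).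
Qed.
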